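(* Let $(X,\varrho)$ and $(Y,d)$ be metric spaces and $f\colon X\to Y$. In addition to all implications valid for topological $X$ (PCP $\Rightarrow$ fragmentable; fragmentable $\Rightarrow$ cliquish; fragmentable $\Rightarrow$ weakly separated; Lebesgue property $\Rightarrow$ generalized Lebesgue property; generalized Lebesgue property $\Rightarrow$ weakly separated and $\Rightarrow$ Borel 1; pointwise discontinuous $\Rightarrow$ cliquish; for $X$ Baire: generalized Lebesgue property $\Rightarrow$ cliquish and cliquish $\Rightarrow$ pointwise discontinuous; for $X$ hereditarily Baire: fragmentable $\Rightarrow$ PCP and generalized Lebesgue property $\Rightarrow$ fragmentable; for $Y$ separable: Borel 1 $\Rightarrow$ Lebesgue property), the following hold: (a) $f$ is weakly separated if and only if $f$ has the LTZ property; (b) if $f$ is weakly separated, then $f$ has the generalized Lebesgue property; (c) if $f$ is fragmentable, then $f$ is Borel 1; (d) if $X$ is hereditarily Baire and $f$ is Borel 1, then $f$ has (PCP); (e) if $X$ is hereditarily Baire and $f$ is weakly separated, then $f$ is fragmentable; (f) if $X$ is separable and $f$ has the generalized Lebesgue property, then $f$ has the Lebesgue property.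
   Context: Let $X$ be a topological space, $(Y,d)$ a metric space and $f\colon X\to Y$. A neighborhood assignment is a family $\{V_x\}_{x\in X}$ of open subsets of $X$ with $x\in V_x$ for every $x$. A family of subsets of $X$ is discrete if every point of $X$ has a neighborhood meeting at most one member of the family; it is $\sigma$-discrete if it is a countable union of discrete families. The function $f$ is called: weakly separated if for every $\varepsilon>0$ there is a neighborhood assignment $\{V_x\}_{x\in X}$ such that for all $x,y\in X$, $(x,y)\in V_y\times V_x$ implies $d(f(x),f(y))<\varepsilon$; fragmentable if for every $\varepsilon>0$ and every nonempty closed $F\subseteq X$ there is an open $U$ with $U\cap F\neq\emptyset$ and $\operatorname{diam} f(U\cap F)<\varepsilon$; cliquish if for every $\varepsilon>0$ and every nonempty open $U\subseteq X$ there is a nonempty open $O\subseteq U$ with $\operatorname{diam} f(O)<\varepsilon$; said to have the Lebesgue property if for every $\varepsilon>0$ there are closed sets $X_n$ ($n\in\mathbb N$) with $X=\bigcup_n X_n$ and $\operatorname{diam} f(X_n)\le\varepsilon$ for all $n$; said to have the generalized Lebesgue property if for every $\varepsilon>0$ there is a $\sigma$-discrete family $\mathcal A_\varepsilon$ of closed subsets of $X$ with $X=\bigcup\mathcal A_\varepsilon$ and $\operatorname{diam} f(A)\le\varepsilon$ for all $A\in\mathcal A_\varepsilon$; said to have (PCP) if for every nonempty closed $F\subseteq X$ the restriction $f|_F$ has a point of continuity; pointwise discontinuous if the set of continuity points of $f$ is dense in $X$; Borel 1 if $f^{-1}(V)$ is an $F_\sigma$ set in $X$ for every open $V\subseteq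 Y$. A space is Baire if every nonempty open subset of it is nonmeager in it; it is hereditarily Baire if every nonempty closed subspace is a Baire space. When $X$ carries a metric $\varrho$, $f$ has the LTZ property if for every $\varepsilon>0$ there is $\delta_\varepsilon\colon X\to(0,\infty)$ such that for all $x,y\in X$, $\varrho(x,y)<\min\{\delta_\varepsilon(x),\delta_\varepsilon(y)\}$ implies $d(f(x),f(y))<\varepsilon$. *)

(* Defs.v *)
From HB Require Import structures.
From mathcomp Require Import all_boot all_order all_algebra.
From mathcomp Require Import all_classical all_reals all_analysis.
From mathcomp Require Import borel_hierarchy.
Set Implicit Arguments. Unset Strict Implicit. Unset Printing Implicit Defensive.
Import Order.TTheory GRing.Theory Num.Theory.
Import numFieldNormedType.Exports.
Local Open Scope classical_set_scope.
Local Open Scope ring_scope.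

Section Defs.
Context {R : realType}.

(* diameter of a subset of a metric space, as an extended real
   (sup of distances; -oo for the empty set, +oo if unbounded) *)
Definition diam {Y : metricType R} (A : set Y) : \bar R :=
  ereal_sup [set (mdist a b)%:E | a in A & b in A].

Section Top.
Context {T : topologicalType}.

Definition nbhd_assignment (V : T -> set T) :=
  forall x, open (V x) /\ V x x.

Definition discrete_family (F : set (set T)) :=
  forall x : T, exists U : set T, nbhs x U /\
    forall A B, F A -> F B -> U `&` A !=set0 -> U `&` B !=set0 -> A = B.

Definition sigma_discrete (F : set (set T)) :=
  exists G : (set (set T))^nat, (forall n, discrete_family (G n)) /\
    F = \bigcup_n G n.

(* Relative notions inside a subset F of T (with the subspace topology):
   relatively open sets are the U `&` F with U open in T; the closure of
   A `<=` F relative to F is closure A `&` F. *)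
Definition nowhere_dense_in (F A : set T) :=
  A `<=` F /\
  forall U, open U -> U `&` F `<=` closure A `&` F -> U `&` F = set0.

Definition meager_in (F A : set T) :=
  exists N : (set T)^nat, (forall n, nowhere_dense_in F (N n)) /\
    A `<=` \bigcup_n N n.

Definition baire_in (F : set T) :=
  forall U, open U -> U `&` F !=set0 -> ~ meager_in F (U `&` F).

Definition baire_space := baire_in setT.

Definition hereditarily_baire :=
  forall F : set T, closed F -> F !=set0 -> baire_in F.

Definition separable := exists D : set T, countable D /\ dense D.

End Top.

Section Fun.
Context {X : topologicalType} {Y : metricType R} (f : X -> Y).

Definition weakly_separated :=
  forall e : R, 0 < e -> exists V : X -> set X, nbhd_assignment V /\
    forall x y, V y x -> V x y -> mdist (f x) (f y) < e.

Definition fragmentable :=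
  forall e : R, 0 < e -> forall F : set X, closed F -> F !=set0 ->
    exists U : set X, open U /\ U `&` F !=set0 /\
      (diam (f @` (U `&` F)) < e%:E)%E.

Definition cliquish :=
  forall e : R, 0 < e -> forall U : set X, open U -> U !=set0 ->
    exists O : set X, open O /\ O !=set0 /\ O `<=` U /\
      (diam (f @` O) < e%:E)%E.

Definition lebesgue_property :=
  forall e : R, 0 < e -> exists Xn : (set X)^nat,
    (forall n, closed (Xn n)) /\ \bigcup_n Xn n = setT /\
    forall n, (diam (f @` Xn n) <= e%:E)%E.

Definition generalized_lebesgue_property :=
  forall e : R, 0 < e -> exists A : set (set X),
    sigma_discrete A /\ (forall B, A B -> closed B) /\
    \bigcup_(B in A) B = setT /\
    forall B, A B -> (diam (f @` B) <= e%:E)%E.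

Definition PCP :=
  forall F : set X, closed F -> F !=set0 ->
    exists2 x, F x & f @ within F (nbhs x) --> f x.

Definition pointwise_discontinuous :=
  dense [set x | {for x, continuous f}].

Definition borel1 :=
  forall V : set Y, open V -> Fsigma (f @^-1` V).

End Fun.

Definition LTZ {X Y : metricType R} (f : X -> Y) :=
  forall e : R, 0 < e -> exists delta : X -> R, (forall x, 0 < delta x) /\
    forall x y, mdist x y < Num.min (delta x) (delta y) ->
      mdist (f x) (f y) < e.

End Defs.

(* Main.v *)
Require Import Defs.
From HB Require Import structures.
From mathcomp Require Import all_boot all_order all_algebra.
From mathcomp Require Import all_classical all_reals all_analysis.
From mathcomp Require Import borel_hierarchy wochoice lra.
Import Order.TTheory GRing.Theory Num.Theory.
Set Implicit Arguments. Unset Strict Implicit. Unset Printing Implicit Defensive.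

Section Seqs.
Context {A B : eqType} (idx : A -> B) (pk : A * nat * seq B -> A) (x0 : A).

Definition gidx (p : A * bool) := idx p.1.

Definition addp n (acc : seq (A * bool)) (p : A * bool) : seq (A * bool) :=
  let acc1 := rcons acc (pk (p.1, n, map gidx acc), true) in
  rcons acc1 (pk (p.1, n, map gidx acc1), false).

Definition stepp n (L : seq (A * bool)) := foldl (addp n) L L.

Fixpoint stt n : seq (A * bool) :=
  if n is m.+1 then stepp m (stt m) else [:: (x0, true)].

Lemma foldl_prefix n L acc : exists L', foldl (addp n) acc L = acc ++ L'.
Proof.
elim: L acc => [|p L IH] acc /=; first by exists [::]; rewrite cats0.
have [L' ->] := IH (addp n acc p).
by exists [:: (pk (p.1, n, map gidx acc), true),
  (pk (p.1, n, map gidx (rcons acc (pk (p.1, n, map gidx acc), true))), false) & L'];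
  rewrite /addp -!cats1 -!catA.
Qed.

Lemma stt_prefix n m : (n <= m)%N -> exists L, stt m = stt n ++ L.
Proof.
elim: m => [|m IH]; first by rewrite leqn0 => /eqP ->; exists [::]; rewrite cats0.
rewrite leq_eqVlt => /orP[/eqP ->|]; first by exists [::]; rewrite cats0.
rewrite ltnS => /IH [L HL] /=; rewrite /stepp.
have [L' ->] := foldl_prefix m (stt m) (stt m).
by exists (L ++ L'); rewrite HL catA.
Qed.

Variables (P : A -> Prop) (Q : A -> A -> nat -> Prop).
Hypothesis pkP : forall c n L, P c ->
  [/\ P (pk (c, n, L)), idx (pk (c, n, L)) \notin L & Q c (pk (c, n, L)) n].

Lemma foldl_inv n L acc : (forall p, p \in L -> P p.1) ->
  (forall p, p \in acc -> P p.1) -> uniq (map gidx acc) ->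
  (forall p, p \in foldl (addp n) acc L -> P p.1) /\ uniq (map gidx (foldl (addp n) acc L)).
Proof.
elim: L acc => [|q L IH] acc //= HL Hacc uacc; apply: IH.
- by move=> p pL; apply: HL; rewrite inE pL orbT.
- have Pq : P q.1 by apply: HL; rewrite inE eqxx.
  move=> p; rewrite /addp !(mem_rcons, in_cons) => /orP[/eqP -> /=|/orP[/eqP -> /=|]].
  + by have [] := pkP n (map gidx (rcons acc (pk (q.1, n, [seq gidx i | i <- acc]), true))) Pq.
  + by have [] := pkP n (map gidx acc) Pq.
  + exact: Hacc.
- have Pq : P q.1 by apply: HL; rewrite inE eqxx.
  rewrite /addp !map_rcons !rcons_uniq uacc andbT.
  have [_ h1 _] := pkP n (map gidx acc) Pq.
  have [_ h2 _] := pkP n (map gidx (rcons acc (pk (q.1, n, [seq gidx i | i <- acc]), true))) Pq.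
  move: h2; rewrite map_rcons => h2.
  by rewrite h2 /gidx /= h1.
Qed.

Lemma stt_inv : P x0 -> forall n,
  (forall p, p \in stt n -> P p.1) /\ uniq (map gidx (stt n)).
Proof.
move=> Px0; elim => [|n [IH1 IH2]] /=.
  by split => // p; rewrite inE => /eqP ->.
exact: foldl_inv.
Qed.

Lemma foldl_near n L acc p : p \in L -> P p.1 ->
  exists a b, [/\ (a, true) \in foldl (addp n) acc L, (b, false) \in foldl (addp n) acc L,
     Q p.1 a n & Q p.1 b n].
Proof.
elim: L acc => [|q L IH] acc //=; rewrite inE => /orP[/eqP ->|pL] Pp; last exact: IH.
have [L' ->] := foldl_prefix n L (addp n acc q).
exists (pk (q.1, n, map gidx acc)),
  (pk (q.1, n, map gidx (rcons acc (pk (q.1, n, map gidx acc), true)))).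
have [_ _ h1] := pkP n (map gidx acc) Pp.
have [_ _ h2] := pkP n (map gidx (rcons acc (pk (q.1, n, map gidx acc), true))) Pp.
split => //; rewrite mem_cat /addp !(mem_rcons, in_cons) eqxx ?orbT //.
Qed.

Lemma stt_near : P x0 -> forall n p, p \in stt n ->
  exists a b, [/\ (a, true) \in stt n.+1, (b, false) \in stt n.+1, Q p.1 a n & Q p.1 b n].
Proof.
move=> Px0 n p pn; have [h _] := stt_inv Px0 n.
exact: foldl_near pn (h _ pn).
Qed.

End Seqs.

Lemma uniq_map_eq (T U : eqType) (g : T -> U) (L : seq T) a b :
  uniq (map g L) -> a \in L -> b \in L -> g a = g b -> a = b.
Proof.
elim: L => [|c L IH] //=; move=> /andP[nc uL].
rewrite !inE => /orP[/eqP ->|aL] /orP[/eqP ->|bL] //.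
- by move=> gcb; move: nc; rewrite gcb (map_f g bL).
- by move=> gac; move: nc; rewrite -gac (map_f g aL).
- exact: IH.
Qed.

Local Open Scope classical_set_scope.
Local Open Scope ring_scope.

Section Basic.
Context {R : realType} {T : metricType R}.
Implicit Types (x y z : T) (A B : set T).

Lemma mdC x y : mdist x y = mdist y x.
Proof. exact: metric_sym. Qed.

Lemma mdT x y z : mdist x z <= mdist x y + mdist y z.
Proof. exact: metric_triangle. Qed.

Lemma md0 x : mdist x x = 0.
Proof. exact: mdistxx. Qed.

Lemma md_ge0 x y : 0 <= mdist x y.
Proof. exact: mdist_ge0. Qed.

Lemma nbhs_mdP x A :
  nbhs x A <-> exists2 e : R, 0 < e & [set y | mdist x y < e] `<=` A.
Proof.
rewrite -metricType_numDomainType.nbhs_nbhs_mdist; split.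
- by move=> [e /= e0 H]; exists e.
- by move=> [e e0 H]; exists e.
Qed.

Lemma open_mdP A :
  open A <-> forall x, A x -> exists2 e : R, 0 < e & [set y | mdist x y < e] `<=` A.
Proof.
rewrite openE; split.
- by move=> H x /H /nbhs_mdP.
- by move=> H x /H /nbhs_mdP.
Qed.

Lemma open_mball x (r : R) : open [set y | mdist x y < r].
Proof.
apply/open_mdP => y xy; exists (r - mdist x y); first by rewrite subr_gt0.
move=> z /= yz; rewrite (le_lt_trans (mdT x y z))//.
by rewrite -ltrBrDl.
Qed.

Lemma mball_nbhs (x : T) (r : R) : 0 < r -> nbhs x [set y | mdist x y < r].
Proof. by move=> r0; apply/nbhs_mdP; exists r. Qed.

Lemma closure_mdP A x :
  closure A x <-> forall e : R, 0 < e -> exists y, A y /\ mdist x y < e.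
Proof.
split.
- move=> cl e e0; have [y [Ay xy]] := cl _ (@mball_nbhs x e e0).
  by exists y.
- move=> H B /nbhs_mdP [e e0 sB]; have [y [Ay xy]] := H e e0.
  by exists y; split => //; apply: sB.
Qed.

Lemma closed_mdP A :
  closed A <-> forall x, (forall e : R, 0 < e -> exists y, A y /\ mdist x y < e) -> A x.
Proof.
split.
- by move=> cA x /closure_mdP; rewrite -(closure_id A).1.
- move=> H; apply/closure_id; apply/seteqP; split; first exact: subset_closure.
  by move=> x /closure_mdP; apply: H.
Qed.

Lemma diam_le (S : set T) (c : R) :
  (forall a b, S a -> S b -> mdist a b <= c) -> (diam S <= c%:E)%E.
Proof.
move=> H; apply: ub_ereal_sup => _ [a Sa [b Sb <-]].
by rewrite lee_fin H.
Qed.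

Lemma diam_ge (S : set T) a b : S a -> S b -> ((mdist a b)%:E <= diam S)%E.
Proof. by move=> Sa Sb; apply: ereal_sup_ubound; exists a => //; exists b. Qed.

Lemma diam_lt_md (S : set T) (e : R) a b :
  (diam S < e%:E)%E -> S a -> S b -> mdist a b < e.
Proof.
move=> dS Sa Sb; rewrite -lte_fin; exact: (le_lt_trans (diam_ge Sa Sb) dS).
Qed.

Lemma diam_le_md (S : set T) (e : R) a b :
  (diam S <= e%:E)%E -> S a -> S b -> mdist a b <= e.
Proof.
move=> dS Sa Sb; rewrite -lee_fin; exact: (le_trans (diam_ge Sa Sb) dS).
Qed.

End Basic.


Section PartA.
Context {R : realType} {X Y : metricType R} (f : X -> Y).

Lemma ws_LTZ : weakly_separated f -> LTZ f.
Proof.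
move=> ws e e0; have [V [nV HV]] := ws e e0.
have : forall x, exists d : R, 0 < d /\ [set y | mdist x y < d] `<=` V x.
  move=> x; have [oV Vx] := nV x.
  by have [d d0 sd] := (open_mdP (V x)).1 oV x Vx; exists d.
move=> /choice [d Hd]; exists d; split; first by move=> x; case: (Hd x).
move=> x y; rewrite lt_min => /andP[h1 h2]; apply: HV.
- by apply: (Hd y).2; rewrite /= mdC.
- by apply: (Hd x).2.
Qed.

Lemma LTZ_ws : LTZ f -> weakly_separated f.
Proof.
move=> lt e e0; have [d [d0 Hd]] := lt e e0.
exists (fun x => [set y | mdist x y < d x]); split.
  by move=> x; split; [exact: open_mball|rewrite /= md0].
move=> x y /= h1 h2; apply: Hd; rewrite lt_min h2 /=.
by rewrite mdC.
Qed.

End PartA.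


Lemma exists_inv_lt {R : realType} (c : R) : 0 < c -> exists n : nat, n.+1%:R^-1 < c.
Proof.
move=> c0; have [N _ HN] := near_infty_natSinv_lt (PosNum c0).
by exists N; apply: HN => /=.
Qed.

Section Stone.
Context {R : realType} {T : metricType R}.

Lemma stone (r : R) : 0 < r -> exists V : nat -> T -> set T,
  [/\ (forall n s, open (V n s)),
      (forall n s, V n s `<=` [set y | mdist s y < r]),
      (forall n s t u v, s <> t -> V n s u -> V n t v -> n.+1%:R^-1 < mdist u v) &
      (forall x, exists n s, V n s x)].
Proof.
move=> r0.
have [rel wo] := well_ordering_principle T.
have anti : {in predT &, antisymmetric rel}.
  apply: wo_chain_antisymmetric => A _; exact: wo.
have : forall x : T, exists s : T, mdist s x < r /\ forall t, mdist t x < r -> rel s t.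
  move=> x; have := wo [pred s | `[< mdist s x < r >]].
  case.
    by exists x; rewrite inE /= md0.
  move=> z [[zA lb] _].
  exists z; split; first by move: zA; rewrite inE.
  by move=> t tx; apply: lb; rewrite inE.
move=> /choice [lst Hlst].
pose rho (n : nat) : R := n.+1%:R^-1.
have rho0 n : 0 < rho n by rewrite invr_gt0.
pose gen n s x := lst x = s /\ forall z, mdist x z < 3 * rho n -> mdist s z < r.
exists (fun n s => [set u | exists x, gen n s x /\ mdist x u < rho n]); split.
- move=> n s; apply/open_mdP => u [x [gx xu]].
  exists (rho n - mdist x u); first by rewrite subr_gt0.
  move=> v /= uv; exists x; split => //.
  rewrite (le_lt_trans (mdT x u v))//; by rewrite -ltrBrDl.
- move=> n s u [x [[_ gx] xu]]; apply: gx.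
  rewrite (lt_le_trans xu)//; have := rho0 n; lra.
- move=> n s t u v st [x [[lx gx] xu]] [y [[ly gy] yv]].
  have key : 3 * rho n <= mdist x y.
    rewrite leNgt; apply/negP => xy.
    have h1 := gx y xy.
    have h2 : mdist t x < r.
      by apply: gy; rewrite mdC.
    apply: st; apply: anti => //; apply/andP; split.
    - by rewrite -lx; apply: (Hlst x).2.
    - by rewrite -ly; apply: (Hlst y).2.
  have t1 := mdT x u y; have t2 := mdT u v y; have t3 := mdC y v.
  rewrite -/(rho n); lra.
- move=> x; have [sx H] := Hlst x.
  have : 0 < (r - mdist (lst x) x) / 3 by rewrite divr_gt0// subr_gt0.
  move=> /exists_inv_lt [n Hn]; exists n, (lst x), x; split; last by rewrite md0.
  split => // z xz; rewrite (le_lt_trans (mdT _ x z))//.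
  rewrite -ltrBrDl; apply: (lt_le_trans xz).
  by rewrite -ler_pdivlMl// mulrC ltW.
Qed.

End Stone.


Lemma open_meet_closure {T : topologicalType} (U A : set T) :
  open U -> U `&` closure A !=set0 -> U `&` A !=set0.
Proof.
move=> oU [x [Ux clx]]; have [y [Ay Uy]] := clx U (open_nbhs_nbhs (conj oU Ux)).
by exists y.
Qed.

Definition npr (k : nat) : nat * nat := odflt (0%N, 0%N) (unpickle k).
Lemma npr_surj (p : nat * nat) : npr (pickle p) = p.
Proof. by rewrite /npr pickleK. Qed.

Section PartB.
Context {R : realType} {X Y : metricType R} (f : X -> Y).

Lemma ws_glp : weakly_separated f -> generalized_lebesgue_property f.
Proof.
move=> /ws_LTZ lt e e0.
have e30 : 0 < e / 3 by rewrite divr_gt0.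
have [d [d0 Hd]] := lt _ e30.
pose Xn (n : nat) := closure [set x | n.+1%:R^-1 < d x].
have : forall n : nat, exists V : nat -> X -> set X,
  [/\ (forall m s, open (V m s)),
      (forall m s, V m s `<=` [set y | mdist s y < n.+1%:R^-1 / 4]),
      (forall m s t u v, s <> t -> V m s u -> V m t v -> m.+1%:R^-1 < mdist u v) &
      (forall x, exists m s, V m s x)].
  move=> n; apply: stone; by rewrite divr_gt0.
move=> /choice [V HV].
pose G (k : nat) : set (set X) :=
  [set closure (V (npr k).1 (npr k).2 s) `&` Xn (npr k).1 | s in [set: X]].
exists (\bigcup_k G k); split; [|split; [|split]].
- exists G; split => // k x; rewrite /G; case: (npr k) => n m /=.
  have [_ _ sep _] := HV n.
  exists [set y | mdist x y < m.+1%:R^-1 / 2]; split.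
    by apply: mball_nbhs; rewrite divr_gt0.
  move=> _ _ [s _ <-] [t _ <-] hs ht.
  have [<-|st] := pselect (s = t); first by [].
  exfalso.
  have oB := @open_mball R X x (m.+1%:R^-1 / 2).
  have mI (A B : set X) : [set y | mdist x y < m.+1%:R^-1 / 2] `&` (A `&` B) !=set0 ->
      [set y | mdist x y < m.+1%:R^-1 / 2] `&` A !=set0.
    by move=> [w [? [? _]]]; exists w.
  have [u [xu Vu]] := open_meet_closure oB (mI _ _ hs).
  have [v [xv Vv]] := open_meet_closure oB (mI _ _ ht).
  have := sep _ _ _ _ _ st Vu Vv.
  have := mdT u x v; rewrite (mdC u x); move: xu xv => /= xu xv.
  have := invr_gt0 (m.+1%:R : R); rewrite ltr0Sn => ?.
  move: (m.+1%:R^-1 : R) => rr in xu xv *; lra.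
- by move=> B [k _ [s _ <-]]; apply: closedI; [exact: closed_closure|exact: closed_closure].
- apply/seteqP; split => // x _.
  have [n nx] := exists_inv_lt (d0 x).
  have [_ _ _ cov] := HV n; have [m [s Vx]] := cov x.
  exists (closure (V n m s) `&` Xn n).
    exists (pickle (n, m)) => //; exists s => //; by rewrite npr_surj.
  by split; apply: subset_closure.
- move=> B [k _ [s _ <-]]; case: (npr k) => n m /=.
  have [_ sub _ _] := HV n.
  have rn0 : 0 < n.+1%:R^-1 :> R by rewrite invr_gt0.
  apply: diam_le => _ _ [z [cz xz] <-] [z' [cz' xz'] <-].
  pose eta : R := n.+1%:R^-1 / 16.
  have eta0 : 0 < eta by rewrite divr_gt0.
  have [w [Vw zw]] := (closure_mdP _ _).1 cz eta eta0.
  have [w' [Vw' zw']] := (closure_mdP _ _).1 cz' eta eta0.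
  have := sub _ _ _ Vw; have := sub _ _ _ Vw'; move=> /= sw' sw.
  have mz0 : 0 < Num.min eta (d z) by rewrite lt_min eta0 d0.
  have mz0' : 0 < Num.min eta (d z') by rewrite lt_min eta0 d0.
  have [x [dx zx]] := (closure_mdP _ _).1 xz _ mz0.
  have [x' [dx' zx']] := (closure_mdP _ _).1 xz' _ mz0'.
  move: zx zx'; rewrite !lt_min => /andP[zx1 zx2] /andP[zx'1 zx'2].
  move: dx dx' => /= dx dx'.
  clear mz0 mz0'; move: (n.+1%:R^-1 : R) rn0 sw sw' dx dx' @eta eta0 zx1 zx'1 zw zw' => rr rn0 sw sw' dx dx' eta eta0 zx1 zx'1 zw zw'.
  have h1 : mdist (f z) (f x) < e / 3.
    apply: Hd; rewrite lt_min zx2 /=.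
    by rewrite (lt_trans zx1)//; apply: (lt_trans _ dx); rewrite /eta; lra.
  have h2 : mdist (f z') (f x') < e / 3.
    apply: Hd; rewrite lt_min zx'2 /=.
    by rewrite (lt_trans zx'1)//; apply: (lt_trans _ dx'); rewrite /eta; lra.
  have h3 : mdist (f x) (f x') < e / 3.
    apply: Hd; rewrite lt_min.
    have : mdist x x' < rr.
      have := mdT x z x'; have := mdT z w x'; have := mdT w s x';
      have := mdT s w' x'; have := mdT w' z' x'.
      have := mdC x z; have := mdC w s; have := mdC z w; have := mdC w' z'.
      move: zx1 zx'1 zw zw' sw sw'; rewrite /eta; lra.
    move=> hx; apply/andP; split; [exact: lt_trans dx| exact: lt_trans dx'].
  have := mdT (f z) (f x) (f z'); have := mdT (f x) (f x') (f z').
  rewrite (mdC (f x') (f z')); lra.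
Qed.
End PartB.


Lemma discfam_sub {T : topologicalType} (F G : set (set T)) :
  G `<=` F -> discrete_family F -> discrete_family G.
Proof.
move=> GF dF x; have [U [Ux HU]] := dF x; exists U; split => //.
by move=> A B /GF FA /GF FB; apply: HU.
Qed.

Lemma discfam_closed {T : topologicalType} (F : set (set T)) :
  discrete_family F -> (forall A, F A -> closed A) -> closed (\bigcup_(A in F) A).
Proof.
move=> dF cF; apply/closure_id; apply/seteqP; split; first exact: subset_closure.
move=> x clx; have [U [Ux HU]] := dF x.
have [y [[A FA Ay] Uy]] := clx U Ux.
exists A => //; apply: contrapT => nAx.
have nC : nbhs x (~` A) by apply: open_nbhs_nbhs; split => //; exact: closed_openC (cF _ FA).
have [z [[B FB Bz] [Uz nAz]]] := clx _ (filterI Ux nC).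
have AB : A = B by apply: HU => //; [exists y | exists z].
by apply: nAz; rewrite AB.
Qed.

Section Glp.
Context {R : realType} {X : topologicalType} {Y : metricType R} (f : X -> Y).

Lemma glp_borel1 : generalized_lebesgue_property f -> borel1 f.
Proof.
move=> glp V oV.
have /choice [A HA] : forall k : nat, exists A : set (set X),
    sigma_discrete A /\ (forall B, A B -> closed B) /\
    \bigcup_(B in A) B = setT /\
    forall B, A B -> (diam (f @` B) <= (k.+1%:R^-1)%:E)%E.
  by move=> k; apply: glp; rewrite invr_gt0.
have /choice [G HG] : forall k : nat, exists G : (set (set X))^nat,
    (forall n, discrete_family (G n)) /\ A k = \bigcup_n G n.
  by move=> k; case: (HA k) => -[G HG] _; exists G.
pose C (p : nat * nat) := \bigcup_(B in [set B | G p.1 p.2 B /\ f @` B `<=` V]) B.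
exists (fun i => C (npr i)).
  move=> i; apply: discfam_closed.
    by apply: (@discfam_sub _ (G (npr i).1 (npr i).2)); [move=> B []|case: (HG (npr i).1)].
  move=> B [GB _]; case: (HA (npr i).1) => _ [cl _]; apply: cl.
  by case: (HG (npr i).1) => _ ->; exists (npr i).2.
apply/seteqP; split.
- move=> x /= Vx; have [r r0 sV] := (open_mdP V).1 oV _ Vx.
  have [k kr] := exists_inv_lt r0.
  case: (HA k) => _ [_ [cov dm]].
  have : (\bigcup_(B in A k) B) x by rewrite cov.
  move=> [B AkB Bx]; move: (AkB); case: (HG k) => _ -> [m _ GB].
  exists (pickle (k, m)) => //; rewrite npr_surj /C /=.
  exists B => //; split => //.
  move=> _ [b Bb <-]; apply: sV => /=.
  rewrite (le_lt_trans _ kr)//; apply: (diam_le_md (dm _ AkB)) => /=; by exists x + exists b.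
- move=> x [i _ [B [_ sB] Bx]]; apply: sB; by exists x.
Qed.

End Glp.

Section FragWS.
Context {R : realType} {X : topologicalType} {Y : metricType R} (f : X -> Y).

Lemma frag_ws : fragmentable f -> weakly_separated f.
Proof.
move=> fr e e0.
pose dom (S : set (X * set X)) := [set y | exists B, S (y, B)].
pose P (S : set (X * set X)) :=
  (forall p, S p -> [/\ open p.2, p.2 p.1 & p.2 `<=` dom S]) /\
  (forall p q, S p -> S q -> p.2 q.1 -> q.2 p.1 -> mdist (f p.1) (f q.1) < e).
have [S [[PS1 PS2] Smax]] : exists S, P S /\ forall B, S `<` B -> ~ P B.
  apply: Zorn_bigcup => F FP tot; split.
  - move=> p [S FS Sp]; have [op ip sp] := (FP _ FS).1 _ Sp; split => //.
    by move=> y /sp [B SB]; exists B; exists S.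
  - move=> p q [S FS Sp] [S' FS' Sq]; have [SS'|S'S] := tot _ _ FS FS'.
    + by apply: (FP _ FS').2 => //; apply: SS'.
    + by apply: (FP _ FS).2 => //; apply: S'S.
have domT : dom S = setT.
  apply: contrapT => ndom.
  have odom : open (dom S).
    rewrite openE /= => x [B SB]; have [op ip sp] := PS1 _ SB; rewrite /interior.
    by apply: (filterS sp); apply: open_nbhs_nbhs.
  have [x0 nx0] : exists x0, ~ dom S x0.
    apply: contrapT => h; apply: ndom; apply/seteqP; split => // y _.
    by apply: contrapT => ny; apply: h; exists y.
  have [U [oU [[x1 [Ux1 Fx1]] dU]]] := fr e e0 _ (open_closedC odom) (ex_intro _ x0 nx0).
  pose S' := S `|` [set p | p.2 = U /\ U p.1 /\ ~ dom S p.1].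
  apply: (Smax S').
    split; first by move=> p Sp; left.
    move=> /(_ (x1, U)) h; have : S' (x1, U) by right.
    move=> /h Sx1; apply: Fx1; by exists U.
  have domS' : dom S `<=` dom S' by move=> y [B SB]; exists B; left.
  split.
  - move=> p [Sp|[-> [Up ndp]]].
      by have [op ip sp] := PS1 _ Sp; split => //; apply: subset_trans sp domS'.
    split => // y Uy; have [dy|ndy] := pselect (dom S y); first exact: domS'.
    by exists U; right.
  - move=> p q [Sp|[p2 [Up ndp]]] [Sq|[q2 [Uq ndq]]].
    + exact: PS2.
    + move=> pq _; exfalso; apply: ndq; have [_ _ sp] := PS1 _ Sp; exact: sp.
    + move=> _ qp; exfalso; apply: ndp; have [_ _ sp] := PS1 _ Sq; exact: sp.
    + move=> _ _; apply: (diam_lt_md dU); by [exists p.1|exists q.1].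
have /choice [V HV] : forall x, exists B, S (x, B).
  by move=> x; have : dom S x by rewrite domT.
exists V; split.
  by move=> x; have [op ip _] := PS1 _ (HV x).
by move=> x y Vyx Vxy; have := PS2 _ _ (HV x) (HV y) Vxy Vyx.
Qed.

End FragWS.


Lemma baire_pick {T : topologicalType} (F W : set T) (C : nat -> set T) :
  baire_in F -> open W -> W `&` F !=set0 -> W `&` F `<=` \bigcup_n C n ->
  (forall n, closed (C n)) ->
  exists n U, [/\ open U, U `<=` W, U `&` F !=set0 & U `&` F `<=` C n].
Proof.
move=> bF oW WF sC cC; apply: contrapT => hno.
apply: (bF W oW WF); exists (fun n => C n `&` (W `&` F)); split; last first.
  by move=> x WFx; have [n _ Cx] := sC _ WFx; exists n.
move=> n; split; first by move=> x [_ [_ ]].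
move=> U oU sU; apply: contrapT => /eqP/set0P ne.
apply: hno; exists n, (U `&` W); split.
- exact: openI.
- by move=> x [].
- have [x [Ux Fx]] := ne.
  have [y [[Wy Fy] Uy]] : (W `&` F) `&` U !=set0.
    have : closure (C n `&` (W `&` F)) x by have [] := sU x (conj Ux Fx).
    move=> /(_ U (open_nbhs_nbhs (conj oU Ux))) [y [[_ WFy] Uy]]; by exists y.
  by exists y.
- move=> x [[Ux Wx] Fx]; have [clx _] := sU x (conj Ux Fx).
  have := closureS (@subIsetl _ (C n) (W `&` F)) clx.
  by rewrite -(closure_id (C n)).1.
Qed.

Lemma diam_sub {R : realType} {T : metricType R} (A B : set T) :
  A `<=` B -> (diam A <= diam B)%E.
Proof.
move=> AB; apply: ereal_sup_le => _ [a Aa [b Bb <-]].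
by exists a; [apply: AB|exists b => //; apply: AB].
Qed.

Section PartE.
Context {R : realType} {X Y : metricType R} (f : X -> Y).

Lemma ws_frag : @hereditarily_baire X -> weakly_separated f -> fragmentable f.
Proof.
move=> hb /ws_LTZ lt e e0 F cF neF.
have e40 : 0 < e / 4 by rewrite divr_gt0.
have [d [d0 Hd]] := lt _ e40.
pose C (n : nat) := closure [set x | n.+1%:R^-1 < d x].
have [n [U [oU _ [x0 [Ux0 Fx0]] sU]]] : exists n U,
    [/\ open U, U `<=` setT, U `&` F !=set0 & U `&` F `<=` C n].
  apply: (baire_pick (hb F cF neF) openT).
  - by case: neF => x Fx; exists x.
  - move=> x [_ Fx]; have [n nx] := exists_inv_lt (d0 x).
    by exists n => //; apply: subset_closure.
  - by move=> n; exact: closed_closure.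
have rn0 : 0 < n.+1%:R^-1 :> R by rewrite invr_gt0.
exists (U `&` [set y | mdist x0 y < n.+1%:R^-1 / 4]); split.
  by apply: openI => //; apply: open_mball.
split.
  by exists x0; split => //; split => //=; rewrite md0 divr_gt0.
have H : forall z z', (U `&` [set y | mdist x0 y < n.+1%:R^-1 / 4]) z ->
    F z -> (U `&` [set y | mdist x0 y < n.+1%:R^-1 / 4]) z' -> F z' ->
    mdist (f z) (f z') < 3 * (e / 4).
  move=> z z' [Uz x0z] Fz [Uz' x0z'] Fz'.
  pose eta : R := n.+1%:R^-1 / 16.
  have eta0 : 0 < eta by rewrite divr_gt0.
  have mz0 : 0 < Num.min eta (d z) by rewrite lt_min eta0 d0.
  have mz0' : 0 < Num.min eta (d z') by rewrite lt_min eta0 d0.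
  have [x [dx zx]] := (closure_mdP _ _).1 (sU _ (conj Uz Fz)) _ mz0.
  have [x' [dx' zx']] := (closure_mdP _ _).1 (sU _ (conj Uz' Fz')) _ mz0'.
  move: zx zx'; rewrite !lt_min => /andP[zx1 zx2] /andP[zx'1 zx'2].
  move: dx dx' x0z x0z' => /= dx dx' x0z x0z'.
  clear mz0 mz0'.
  move: (n.+1%:R^-1 : R) rn0 dx dx' @eta eta0 zx1 zx'1 x0z x0z' =>
    rr rn0 dx dx' eta eta0 zx1 zx'1 x0z x0z'.
  have h1 : mdist (f z) (f x) < e / 4.
    apply: Hd; rewrite lt_min zx2 /=.
    by rewrite (lt_trans zx1)//; apply: (lt_trans _ dx); rewrite /eta; lra.
  have h2 : mdist (f z') (f x') < e / 4.
    apply: Hd; rewrite lt_min zx'2 /=.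
    by rewrite (lt_trans zx'1)//; apply: (lt_trans _ dx'); rewrite /eta; lra.
  have h3 : mdist (f x) (f x') < e / 4.
    apply: Hd; rewrite lt_min.
    have : mdist x x' < rr.
      have := mdT x z x'; have := mdT z x0 x'; have := mdT x0 z' x'.
      have := mdC x z; have := mdC z x0.
      move: zx1 zx'1 x0z x0z'; rewrite /eta; lra.
    move=> hx; apply/andP; split; [exact: lt_trans dx| exact: lt_trans dx'].
  have := mdT (f z) (f x) (f z'); have := mdT (f x) (f x') (f z').
  rewrite (mdC (f x') (f z')); lra.
apply: (@le_lt_trans _ _ (3 * (e / 4))%:E).
  apply: diam_le => _ _ [z [Vz Fz] <-] [z' [Vz' Fz'] <-].
  by apply: ltW; apply: H.
by rewrite lte_fin; lra.
Qed.

End PartE.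

Section FragPCP.
Context {R : realType} {X : topologicalType} {Y : metricType R} (f : X -> Y).

Lemma frag_pcp : @hereditarily_baire X -> fragmentable f -> PCP f.
Proof.
move=> hb fr F cF neF.
pose O (k : nat) := \bigcup_(U in [set U | open U /\ (diam (f @` (U `&` F)) < (k.+1%:R^-1)%:E)%E]) U.
have oO k : open (O k) by apply: bigcup_open => U [].
have [x [Fx Ox]] : exists x, F x /\ forall k, O k x.
  apply: contrapT => hno.
  have [k [U [oU _ UF sU]]] : exists k U,
      [/\ open U, U `<=` setT, U `&` F !=set0 & U `&` F `<=` F `\` O k].
    apply: (baire_pick (hb F cF neF) openT).
    - by case: neF => x Fx; exists x.
    - move=> x [_ Fx]; apply: contrapT => nx; apply: hno; exists x; split => //.
      move=> k; apply: contrapT => nk; apply: nx; exists k => //.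
    - by move=> k; rewrite setDE; apply: closedI => //; apply: open_closedC.
  have cl : closed (closure (U `&` F)) by exact: closed_closure.
  have ne : closure (U `&` F) !=set0.
    by case: UF => y Uy; exists y; apply: subset_closure.
  have rk : 0 < k.+1%:R^-1 :> R by rewrite invr_gt0.
  have [V [oV [VF dV]]] := fr _ rk _ cl ne.
  have [y [Vy [Uy Fy]]] : V `&` (U `&` F) !=set0 by apply: open_meet_closure.
  have [_ nOy] := sU y (conj Uy Fy); apply: nOy.
  exists (V `&` U); first (split; first exact: openI).
    apply: le_lt_trans dV; apply: diam_sub; apply: image_subset.
    move=> z [[Vz Uz] Fz]; split => //; apply: subset_closure; by split.
  by split.
exists x => //; apply/metricType_numDomainType.cvgrPdist_lt => eps eps0.
have [k kl] := exists_inv_lt eps0.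
have [U [oU dU] Ux] := Ox k.
rewrite near_withinE; apply: (@filterS _ _ _ U); last first.
  by apply: open_nbhs_nbhs.
move=> z Uz Fz; apply: lt_trans kl.
by apply: (diam_lt_md dU); [exists x|exists z].
Qed.

End FragPCP.


Definition npr3 (i : nat) : nat * (nat * nat) := odflt (0%N, (0%N, 0%N)) (unpickle i).
Lemma npr3_surj p : npr3 (pickle p) = p.
Proof. by rewrite /npr3 pickleK. Qed.

Section PartF.
Context {R : realType} {X Y : metricType R} (f : X -> Y).

Lemma sep_glp_lp : @separable X -> generalized_lebesgue_property f -> lebesgue_property f.
Proof.
move=> [D [cD dD]] glp e e0.
have /countable_injP [g ginj] := cD.
have [A [[G [dG AG]] [cA [covA dA]]]] := glp e e0.
pose ball' (d : X) (k : nat) := [set y | mdist d y < k.+1%:R^-1].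
pose good (m : nat) (j k : nat) (B : set X) := exists d, [/\ D d, g d = j,
   ball' d k `&` B !=set0 &
   forall B', G m B' -> ball' d k `&` B' !=set0 -> B' = B].
pose Xn (p : nat * (nat * nat)) :=
  \bigcup_(B in [set B | G p.1 B /\ good p.1 p.2.1 p.2.2 B]) B.
have uniq1 p B B' : G p.1 B -> good p.1 p.2.1 p.2.2 B ->
    G p.1 B' -> good p.1 p.2.1 p.2.2 B' -> B = B'.
  move=> GB [d [Dd gd _ H]] GB' [d' [Dd' gd' ne' _]].
  have dd : d = d' := ginj d d' (mem_set Dd) (mem_set Dd') (etrans gd (esym gd')).
  by rewrite (H B') // dd.
exists (fun i => Xn (npr3 i)); split; [|split].
- move=> i; rewrite /Xn; apply: discfam_closed.
    by apply: (@discfam_sub _ (G (npr3 i).1)) => // B [].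
  by move=> B [GB _]; apply: cA; rewrite AG; exists (npr3 i).1.
- apply/seteqP; split => // x _.
  have : (\bigcup_(B in A) B) x by rewrite covA.
  move=> [B AB Bx]; move: (AB); rewrite AG => -[m _ GB].
  have [U [Ux HU]] := dG m x.
  have [r r0 sU] := (nbhs_mdP _ _).1 Ux.
  have r20 : 0 < r / 2 by rewrite divr_gt0.
  have [k kr] := exists_inv_lt r20.
  have rk0 : 0 < k.+1%:R^-1 :> R by rewrite invr_gt0.
  have [d [xd Dd]] : [set y | mdist x y < k.+1%:R^-1] `&` D !=set0.
    apply: dD; [by exists x; rewrite /= md0|exact: open_mball].
  exists (pickle (m, (g d, k))) => //; rewrite npr3_surj /Xn /=.
  exists B => //; split => //; exists d; split => //.
    by exists x; split => //; rewrite /ball' /= mdC.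
  move=> B' GB' [y [dy B'y]]; apply: HU => //.
  + exists y; split => //; apply: sU => /=.
    move: dy xd; rewrite /ball' /= => dy xd.
    have := mdT x d y; move: (k.+1%:R^-1 : R) rk0 kr dy xd => rr; lra.
  + by exists x; split => //; apply: sU; rewrite /= md0.
- move=> i; apply: diam_le => _ _ [z [B [GB gB] Bz] <-] [z' [B' [GB' gB'] Bz'] <-].
  have BB' := uniq1 _ _ _ GB gB GB' gB'.
  apply: (diam_le_md (dA B _)) => //.
    by rewrite AG; exists (npr3 i).1.
  by exists z'; rewrite // BB'.
Qed.

End PartF.


Lemma inv_le {R : realType} (m p : nat) : (m <= p)%N -> p.+1%:R^-1 <= m.+1%:R^-1 :> R.
Proof. by move=> mp; rewrite lef_pV2 ?posrE ?ltr0Sn // ler_nat ltnS. Qed.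

Section Core.
Context {R : realType} {X Y : metricType R} (f : X -> Y).

Lemma core (V : Y -> set Y) (H : set X) :
  @hereditarily_baire X -> borel1 f -> closed H -> H !=set0 ->
  (forall s, open (V s)) -> (forall s t y, V s y -> V t y -> s = t) ->
  H `<=` f @^-1` (\bigcup_(s in setT) V s) ->
  exists s U, [/\ open U, U `&` H !=set0 & U `&` H `<=` f @^-1` (V s)].
Proof.
move=> hb b1 cH neH oV dV sH; apply: contrapT => hno.
have [x0 Hx0] := neH.
have /choice [idx Hidx] : forall x, exists s, H x -> V s (f x).
  move=> x; have [Hx|nHx] := pselect (H x); last by exists (f x).
  by have [s _ Vs] := sH _ Hx; exists s.
have /choice [D HD] : forall s, exists D : nat -> set X,
    (forall k, closed (D k)) /\ f @^-1` (V s) = \bigcup_k D k.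
  by move=> s; have [D cD eD] := b1 _ (oV s); exists D.
have fresh : forall c (r : R) (L : seq Y), 0 < r -> H c ->
    exists x, [/\ H x, mdist c x < r & idx x \notin L].
  move=> c r L r0 Hc; apply: contrapT => hn.
  pose Cf (i : nat) := D (nth (idx c) L (npr i).1) (npr i).2.
  have ne1 : [set y | mdist c y < r] `&` H !=set0.
    by exists c; split => //=; rewrite md0.
  have cov : [set y | mdist c y < r] `&` H `<=` \bigcup_i Cf i.
    move=> x [cx Hx]; have iL : idx x \in L.
      by apply: contrapT => /negP nL; apply: hn; exists x.
    have : (f @^-1` V (idx x)) x by apply: Hidx.
    rewrite (HD (idx x)).2 => -[k _ Dk].
    exists (pickle (index (idx x) L, k)) => //.
    by rewrite /Cf npr_surj /= nth_index.
  have cC : forall i, closed (Cf i) by move=> i; apply: (HD _).1.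
  have [i [U [oU _ UH sU]]] := baire_pick (hb H cH neH) (open_mball c r) ne1 cov cC.
  apply: hno; exists (nth (idx c) L (npr i).1), U; split => // x UHx.
  by rewrite (HD _).2; exists (npr i).2 => //; apply: sU.
have /choice [pk Hpk] : forall t : X * nat * seq Y, exists x, H t.1.1 ->
    [/\ H x, idx x \notin t.2 & mdist t.1.1 x < t.1.2.+1%:R^-1].
  move=> [[c n] L] /=; have [Hc|nHc] := pselect (H c); last by exists x0.
  have n0 : 0 < n.+1%:R^-1 :> R by rewrite invr_gt0.
  have [x [Hx cx nL]] := fresh c _ L n0 Hc.
  by exists x.
pose Q := fun (c a : X) (n : nat) => mdist c a < n.+1%:R^-1.
have pkP : forall c n L, H c ->
    [/\ H (pk (c, n, L)), idx (pk (c, n, L)) \notin L & Q c (pk (c, n, L)) n].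
  by move=> c n L Hc; exact: (Hpk (c, n, L) Hc).
pose st := stt idx pk x0.
have sinv := @stt_inv _ _ idx pk x0 H Q pkP Hx0.
have snear := @stt_near _ _ idx pk x0 H Q pkP Hx0.
pose S1 := [set x | exists n, (x, true) \in st n].
pose S2 := [set x | exists n, (x, false) \in st n].
pose S := S1 `|` S2.
have SH : S `<=` H.
  by move=> x [[n xn]|[n xn]]; apply: ((sinv n).1 _ xn).
pose K := closure S.
have KH : K `<=` H by move=> x Kx; rewrite (closure_id H).1 //; apply: closureS Kx.
have neK : K !=set0 by exists x0; apply: subset_closure; left; exists 0%N; rewrite inE.
have cK : closed K by apply: closed_closure.
have sep12 : forall x y, S1 x -> S2 y -> idx x <> idx y.
  move=> x y [n xn] [m ym] ixy.
  have [L1 e1] := @stt_prefix _ _ idx pk x0 n (maxn n m) (leq_maxl _ _).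
  have [L2 e2] := @stt_prefix _ _ idx pk x0 m (maxn n m) (leq_maxr _ _).
  have xp : (x, true) \in st (maxn n m) by rewrite /st e1 mem_cat xn.
  have yp : (y, false) \in st (maxn n m) by rewrite /st e2 mem_cat ym.
  by have := uniq_map_eq (sinv (maxn n m)).2 xp yp ixy.
pose I1 := [set s | exists x, S1 x /\ idx x = s].
pose T1 := f @^-1` (\bigcup_(s in I1) V s).
pose T2 := f @^-1` (\bigcup_(s in ~` I1) V s).
have fT1 : Fsigma T1 by apply: b1; apply: bigcup_open => s _; exact: oV.
have fT2 : Fsigma T2 by apply: b1; apply: bigcup_open => s _; exact: oV.
have S1T1 : S1 `<=` T1.
  move=> x S1x; exists (idx x); first by exists x.
  by apply: Hidx; apply: SH; left.
have S2T2 : S2 `<=` T2.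
  move=> y S2y; exists (idx y).
    by move=> [x [S1x ixy]]; exact: (sep12 x y S1x S2y ixy).
  by apply: Hidx; apply: SH; right.
have T12 : forall z, T1 z -> T2 z -> False.
  by move=> z [s Is Vs] [t It Vt]; apply: It; rewrite -(dV _ _ _ Vs Vt).
have KT : K `<=` T1 `|` T2.
  move=> z Kz; have Vz := Hidx z (KH _ Kz).
  have [I|nI] := pselect (I1 (idx z)); [left|right]; by exists (idx z).
have dens : forall z, K z -> forall eps : R, 0 < eps ->
    (exists x, S1 x /\ mdist z x < eps) /\ (exists x, S2 x /\ mdist z x < eps).
  move=> z Kz eps eps0.
  have e20 : 0 < eps / 2 by rewrite divr_gt0.
  have [y [Sy zy]] := (closure_mdP _ _).1 Kz _ e20.
  have [n yn] : exists n, exists c, (y, c) \in st n.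
    by case: Sy => -[n yn]; exists n; eexists; exact: yn.
  have [m mlt] := exists_inv_lt e20.
  case: yn => c yn.
  have [L1 e1] := @stt_prefix _ _ idx pk x0 n (maxn n m) (leq_maxl _ _).
  have yp : (y, c) \in st (maxn n m) by rewrite /st e1 mem_cat yn.
  have [a [b [ain bin ya yb]]] := snear _ _ yp.
  have le := @inv_le R _ _ (leq_maxr n m).
  move: ya yb; rewrite /Q /= => ya yb.
  split; [exists a; split; first by exists (maxn n m).+1
         |exists b; split; first by exists (maxn n m).+1].
  - have := mdT z y a; move: (maxn n m).+1%:R^-1 le ya => rr le ya.
    move: (m.+1%:R^-1 : R) mlt le => mm mlt le; lra.
  - have := mdT z y b; move: (maxn n m).+1%:R^-1 le yb => rr le yb.
    move: (m.+1%:R^-1 : R) mlt le => mm mlt le; lra.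
have [C1 cC1 eC1] := fT1.
have [C2 cC2 eC2] := fT2.
pose E (i : nat) := if (npr i).1 == 0%N then C1 (npr i).2 else C2 (npr i).2.
have covK : setT `&` K `<=` \bigcup_i E i.
  move=> z [_ Kz]; case: (KT _ Kz) => [T1z|T2z].
  - move: T1z; rewrite eC1 => -[k _ Ck]; exists (pickle (0%N, k)) => //.
    by rewrite /E npr_surj.
  - move: T2z; rewrite eC2 => -[k _ Ck]; exists (pickle (1%N, k)) => //.
    by rewrite /E npr_surj.
have cE : forall i, closed (E i) by move=> i; rewrite /E; case: ifP.
have neTK : setT `&` K !=set0 by case: neK => z Kz; exists z.
have [i [U [oU _ [z [Uz Kz]] sU]]] := baire_pick (hb K cK neK) openT neTK covK cE.
have [r r0 sr] := (open_mdP U).1 oU z Uz.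
have [[x [S1x zx]] [y [S2y zy]]] := dens z Kz r r0.
have Kx : K x by apply: subset_closure; left.
have Ky : K y by apply: subset_closure; right.
have Ex := sU x (conj (sr _ zx) Kx).
have Ey := sU y (conj (sr _ zy) Ky).
move: Ex Ey; rewrite /E; case: ifP => _ Ex Ey.
- apply: (T12 y); last exact: S2T2.
  by rewrite eC1; exists (npr i).2.
- apply: (T12 x); first exact: S1T1.
  by rewrite eC2; exists (npr i).2.
Qed.
End Core.

Section PartD.
Context {R : realType} {X Y : metricType R} (f : X -> Y).

Lemma borel1_frag : @hereditarily_baire X -> borel1 f -> fragmentable f.
Proof.
move=> hb b1 e e0 F cF neF.
have e40 : 0 < e / 4 by rewrite divr_gt0.
have [V [oV subV sepV covV]] := @stone R Y (e / 4) e40.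
have dV : forall n s t y, V n s y -> V n t y -> s = t.
  move=> n s t y Vs Vt; apply: contrapT => st.
  by have := sepV _ _ _ _ _ st Vs Vt; rewrite md0 ltNge ltW // invr_gt0.
have /choice [C HC] : forall n, exists C : nat -> set X,
    (forall k, closed (C k)) /\ f @^-1` (\bigcup_(s in setT) V n s) = \bigcup_k C k.
  move=> n; have : open (\bigcup_(s in setT) V n s).
    by apply: bigcup_open => s _; exact: oV.
  by move=> /b1 [C cC eC]; exists C.
pose Cf (i : nat) := C (npr i).1 (npr i).2.
have neTF : setT `&` F !=set0 by case: neF => z Fz; exists z.
have covF : setT `&` F `<=` \bigcup_i Cf i.
  move=> x [_ Fx]; have [n [s Vs]] := covV (f x).
  have : (f @^-1` (\bigcup_(s in setT) V n s)) x by exists s.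
  rewrite (HC n).2 => -[k _ Ck]; exists (pickle (n, k)) => //.
  by rewrite /Cf npr_surj.
have cCf : forall i, closed (Cf i) by move=> i; apply: (HC _).1.
have [i [U [oU _ UF sU]]] := baire_pick (hb F cF neF) openT neTF covF cCf.
pose H := closure (U `&` F).
have cH : closed H by apply: closed_closure.
have neH : H !=set0 by case: UF => z Uz; exists z; apply: subset_closure.
have HF : H `<=` F.
  move=> x Hx; rewrite (closure_id F).1 //; apply: closureS Hx; by move=> y [].
have HC' : H `<=` f @^-1` (\bigcup_(s in setT) V (npr i).1 s).
  move=> x Hx; rewrite (HC (npr i).1).2; exists (npr i).2 => //.
  have := closureS sU Hx; by rewrite -(closure_id (Cf i)).1.
have [s [U' [oU' U'H sU']]] := core hb b1 cH neH (oV (npr i).1) (dV (npr i).1) HC'.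
exists (U' `&` U); split; first exact: openI.
split.
  have [y [U'y [Uy Fy]]] := open_meet_closure oU' U'H.
  by exists y; split.
apply: (@le_lt_trans _ _ (e / 2)%:E); last by rewrite lte_fin; lra.
apply: diam_le => _ _ [z [[U'z Uz] Fz] <-] [z' [[U'z' Uz'] Fz'] <-].
have Hz : H z by apply: subset_closure.
have Hz' : H z' by apply: subset_closure.
have := subV _ s _ (sU' z (conj U'z Hz)); have := subV _ s _ (sU' z' (conj U'z' Hz')).
move=> /= h1 h2; have := mdT (f z) s (f z'); rewrite (mdC (f z) s); lra.
Qed.

End PartD.

Theorem theorem2p4 (R : realType) (X Y : metricType R) (f : X -> Y) :
  (weakly_separated f <-> LTZ f) /\
  (weakly_separated f -> generalized_lebesgue_property f) /\
  (fragmentable f -> borel1 f) /\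
  (@hereditarily_baire X -> borel1 f -> PCP f) /\
  (@hereditarily_baire X -> weakly_separated f -> fragmentable f) /\
  (@separable X -> generalized_lebesgue_property f -> lebesgue_property f).
Proof.
split; first by split; [apply: ws_LTZ | apply: LTZ_ws].
split; first exact: ws_glp.
split; first by move=> fr; apply: glp_borel1; apply: ws_glp; apply: frag_ws.
split; first by move=> hb b; apply: frag_pcp => //; apply: borel1_frag.
split; first exact: ws_frag.
exact: sep_glp_lp.
Qed.
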